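(* Let $T$ be a decomposition tree of a distance-hereditary graph $G$, and let $v$ be an internal node of $T$ labeled $\odot$ with left child $v_l$ and right child $v_r$, such that property (P) holds at $v_l$ and at $v_r$. Then $\hat\beta(v)=\hat\beta(v_l)+\hat\beta(v_r)$.
   Context: All graphs are finite, simple, undirected. For a graph $H$ and $S\subseteq V(H)$, $N_H[S]$ is $S$ together with all vertices adjacent to a vertex of $S$, and $H[S]$ is the induced subgraph. Graphs carry a ''twin set'': a single-vertex graph on $x$ has twin set $\{x\}$. For vertex-disjoint graphs $G_l,G_r$ with twin sets $TS(G_l),TS(G_r)$: the true twin operation $G_l\otimes G_r$ has vertex set $V(G_l)\cup V(G_r)$, edge set $E(G_l)\cup E(G_r)\cup\{uw: u\in TS(G_l), w\in TS(G_r)\}$ and twin set $TS(G_l)\cup TS(G_r)$; the false twin operation $G_l\odot G_r$ has vertex set $V(G_l)\cup V(G_r)$, edge set $E(G_l)\cup E(G_r)$, twin set $TS(G_l)\cup TS(G_r)$; the attachment operation $G_l\oplus G_r$ has the same vertex and edge sets as $G_l\otimes G_r$ and twin set $TS(G_l)$. A decomposition tree $T$ of $G$ is a rooted binary tree whose leaves are in bijection with $V(G)$, each internal node having a left and a right child and a label in $\{\otimes,\odot,\oplus\}$; for each node $v$ define $\hat G(v)$ and $\hat{TS}(v)$ recursively: for a leaf $x$, the single-vertex graph on $x$ with twin set $\{x\}$; for an internal node $v$ with label $\circ$ and children $v_l,v_r$, $\hat G(v)=\hat G(v_l)\circ\hat G(v_r)$ with the corresponding twin set; one requires $\hat G(\text{root})=G$.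 Then $\hat G(v)$ is the subgraph of $G$ induced by the set $\hat V(v)$ of leaves below $v$. For a node $u$ and $0\le k\le|\hat{TS}(u)|$, call $S\subseteq\hat V(u)$ $k$-feasible if $\hat V(u)\setminus\hat{TS}(u)\subseteq N_{\hat G(u)}[S]$ and there is $X\subseteq S\cap\hat{TS}(u)$ with $|X|=k$ such that $\hat G(u)[S\setminus X]$ has a perfect matching. $\hat\gamma_k(u)$ is the minimum size of a $k$-feasible set. $\hat{min}(u)=\min\{\hat\gamma_k(u):0\le k\le|\hat{TS}(u)|\}$, and $\hat\alpha(u)$, $\hat\beta(u)$ are the smallest and the largest $k$ with $\hat\gamma_k(u)=\hat{min}(u)$. Property (P) holds at $u$ if for every $0\le k\le|\hat{TS}(u)|$: $\hat\gamma_k(u)=\hat{min}(u)+\hat\alpha(u)-k$ when $k\le\hat\alpha(u)$; $\hat\gamma_k(u)=\hat{min}(u)+k-\hat\beta(u)$ when $k\ge\hat\beta(u)$; $\hat\gamma_k(u)=\hat{min}(u)$ when $\hat\alpha(u)<k<\hat\beta(u)$ and $k-\hat\alpha(u)$ is even; and $\hat\gamma_k(u)=\hat{min}(u)+1$ otherwise. *)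

(* Defs.v *)
From mathcomp Require Import all_boot.
Set Implicit Arguments. Unset Strict Implicit. Unset Printing Implicit Defensive.

Definition simple_graph (T : finType) (G : rel T) : Prop :=
  symmetric G /\ irreflexive G.

(* a walk of length (size p) from u to v using only vertices of S *)
Definition walk_in (T : finType) (G : rel T) (S : {set T}) (u v : T) (p : seq T) : Prop :=
  u \in S /\ path (fun a b => G a b && (b \in S)) u p /\ last u p = v.

(* G is distance-hereditary: in every induced subgraph G[S] in which u and v
   are connected, dist_{G[S]}(u,v) = dist_G(u,v); i.e. (as dist_{G[S]} >= dist_G
   always) for every walk of length n from u to v in G there is a walk of
   length <= n from u to v inside G[S]. *)
Definition distance_hereditary (T : finType) (G : rel T) : Prop :=
  forall (S : {set T}) (u v : T),
    (exists p, walk_in G S u v p) ->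
    forall p, walk_in G setT u v p ->
    exists q, walk_in G S u v q /\ size q <= size p.

Inductive dlabel := TrueTwin (* ⊗ *) | FalseTwin (* ⊙ *) | Attach (* ⊕ *).

Inductive dtree (T : Type) :=
| Leaf of T
| Node of dlabel & dtree T & dtree T.
Arguments Leaf {T}.
Arguments Node {T}.

Fixpoint leaves (T : Type) (t : dtree T) : seq T :=
  match t with Leaf x => [:: x] | Node _ l r => leaves l ++ leaves r end.

Definition hV (T : finType) (t : dtree T) : {set T} := [set x in leaves t].

Fixpoint hTS (T : finType) (t : dtree T) : {set T} :=
  match t with
  | Leaf x => [set x]
  | Node TrueTwin l r => hTS l :|: hTS r
  | Node FalseTwin l r => hTS l :|: hTS r
  | Node Attach l _ => hTS l
  end.

Fixpoint hE (T : finType) (t : dtree T) : rel T :=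
  match t with
  | Leaf _ => fun _ _ => false
  | Node FalseTwin l r => fun x y => hE l x y || hE r x y
  | Node _ l r => fun x y =>
      [|| hE l x y, hE r x y,
          (x \in hTS l) && (y \in hTS r) | (y \in hTS l) && (x \in hTS r)]
  end.

Definition decomp_tree (T : finType) (G : rel T) (t : dtree T) : Prop :=
  uniq (leaves t) /\ (forall x, x \in leaves t) /\ (forall x y, G x y = hE t x y).

Fixpoint is_node (T : Type) (v t : dtree T) : Prop :=
  v = t \/ match t with Leaf _ => False | Node _ l r => is_node v l \/ is_node v r end.

Definition cnbhd (T : finType) (u : dtree T) (S : {set T}) : {set T} :=
  S :|: [set y in hV u | [exists x in S, hE u x y]].

Definition has_pm (T : finType) (e : rel T) (W : {set T}) : bool :=
  [exists M : {set {set T}},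
    [forall m in M, [&& #|m| == 2, m \subset W &
                        [forall x in m, forall y in m, (x != y) ==> e x y]]] &&
    [forall x in W, #|[set m in M | x \in m]| == 1]].

Definition kfeasible (T : finType) (u : dtree T) (k : nat) (S : {set T}) : bool :=
  [&& S \subset hV u, (hV u :\: hTS u) \subset cnbhd u S &
      [exists X : {set T}, [&& X \subset S :&: hTS u, #|X| == k &
                               has_pm (hE u) (S :\: X)]]].

(* \hat gamma_k(u); None = no k-feasible set (value +infinity).
   When some feasible set exists, the minimum over them is taken with the
   neutral element #|T| (an upper bound for every set size). *)
Definition hgamma (T : finType) (u : dtree T) (k : nat) : option nat :=
  if [exists S, kfeasible u k S]
  then Some (\big[minn/#|T|]_(S : {set T} | kfeasible u k S) #|S|)
  else None.

Definition hmin (T : finType) (u : dtree T) : option nat :=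
  if [exists k : 'I_(#|hTS u|.+1), hgamma u k != None]
  then Some (\big[minn/#|T|]_(k < #|hTS u|.+1 | hgamma u k != None)
               odflt 0 (hgamma u k))
  else None.

Definition halpha (T : finType) (u : dtree T) : nat :=
  \big[minn/#|hTS u|]_(k < #|hTS u|.+1 | hgamma u k == hmin u) k.

Definition hbeta (T : finType) (u : dtree T) : nat :=
  \max_(k < #|hTS u|.+1 | hgamma u k == hmin u) k.

Definition propP (T : finType) (u : dtree T) : Prop :=
  exists m, hmin u = Some m /\
  forall k, k <= #|hTS u| ->
    hgamma u k =
      Some (if k <= halpha u then m + halpha u - k
            else if hbeta u <= k then m + k - hbeta u
            else if ~~ odd (k - halpha u) then m
            else m + 1).

(* Main.v *)
Require Import Defs.
From mathcomp Require Import all_boot zify.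
Set Implicit Arguments. Unset Strict Implicit. Unset Printing Implicit Defensive.

Lemma min_le (I:finType) (P: pred I) (F: I -> nat) m i : P i -> \big[minn/m]_(j | P j) F j <= F i.
Proof.
move=> Pi; have : i \in index_enum I by rewrite mem_index_enum.
elim: (index_enum I) => // a s IH; rewrite inE big_cons => /orP[/eqP<-|iS].
  by rewrite Pi geq_minl.
by case: (P a); rewrite ?geq_min IH ?orbT.
Qed.

Lemma min_ge (I:finType) (P: pred I) (F: I -> nat) m c : c <= m -> (forall j, P j -> c <= F j) -> c <= \big[minn/m]_(j|P j) F j.
Proof. move=> cm H; apply: (big_ind (fun x => c <= x)) => // x y hx hy; by rewrite leq_min hx hy. Qed.

Lemma inhV (T : finType) (u : dtree T) x : (x \in hV u) = (x \in leaves u).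
Proof. by rewrite /hV inE. Qed.

Lemma hTS_in (T : finType) (u : dtree T) x : x \in hTS u -> x \in leaves u.
Proof.
elim: u => [y|[] l IHl r IHr] /=; rewrite ?inE ?mem_cat //.
- by case/orP=> [/IHl->|/IHr->]; rewrite ?orbT.
- by case/orP=> [/IHl->|/IHr->]; rewrite ?orbT.
- by move/IHl->.
Qed.

Lemma hE_in (T : finType) (u : dtree T) x y : hE u x y -> (x \in leaves u) && (y \in leaves u).
Proof.
elim: u => [z|[] l IHl r IHr] //=; rewrite !mem_cat.
- by case/or4P => [/IHl/andP[->->]|/IHr/andP[->->]|/andP[/hTS_in->/hTS_in->]|/andP[/hTS_in->/hTS_in->]]; rewrite ?orbT.
- by case/orP => [/IHl/andP[->->]|/IHr/andP[->->]]; rewrite ?orbT.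
- by case/or4P => [/IHl/andP[->->]|/IHr/andP[->->]|/andP[/hTS_in->/hTS_in->]|/andP[/hTS_in->/hTS_in->]]; rewrite ?orbT.
Qed.

Lemma node_uniq (T : finType) (v t : dtree T) : is_node v t -> uniq (leaves t) -> uniq (leaves v).
Proof.
elim: t => [x|lab l IHl r IHr] /= [-> //|H] U //.
rewrite cat_uniq in U; case/and3P: U => Ul _ Ur.
by case: H => [/IHl|/IHr]; auto.
Qed.

Lemma pm_union (T : finType) (e e1 e2 : rel T) W1 W2 : has_pm e1 W1 -> has_pm e2 W2 ->
  (forall x, x \in W1 -> x \in W2 -> False) -> (forall x y, e1 x y -> e x y) ->
  (forall x y, e2 x y -> e x y) -> has_pm e (W1 :|: W2).
Proof.
move=> /existsP[M1 /andP[/forallP H1 /forallP C1]] /existsP[M2 /andP[/forallP H2 /forallP C2]] D E1 E2.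
apply/existsP; exists (M1 :|: M2); apply/andP; split.
- apply/forallP => m; apply/implyP; rewrite inE => /orP[mM|mM].
  + have /implyP/(_ mM)/and3P[c s /forallP f] := H1 m.
    rewrite c /=; apply/andP; split; first by apply: subset_trans s (subsetUl _ _).
    apply/forallP => x; apply/implyP => xm; apply/forallP => y; apply/implyP => ym; apply/implyP => ne.
    apply: E1; have := f x; rewrite xm /= => /forallP/(_ y); by rewrite ym ne.
  + have /implyP/(_ mM)/and3P[c s /forallP f] := H2 m.
    rewrite c /=; apply/andP; split; first by apply: subset_trans s (subsetUr _ _).
    apply/forallP => x; apply/implyP => xm; apply/forallP => y; apply/implyP => ym; apply/implyP => ne.
    apply: E2; have := f x; rewrite xm /= => /forallP/(_ y); by rewrite ym ne.
- apply/forallP => x; apply/implyP; rewrite inE => /orP[xW|xW].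
  + have /implyP/(_ xW) := C1 x.
    rewrite (_ : [set m in M1 :|: M2 | x \in m] = [set m in M1 | x \in m]) //.
    apply/setP => m; rewrite !inE; case xm: (x \in m); rewrite ?andbF ?andbT //.
    case mM2: (m \in M2); last by rewrite orbF.
    have /implyP/(_ mM2)/and3P[_ s _] := H2 m.
    by case: (D x xW (subsetP s x xm)).
  + have /implyP/(_ xW) := C2 x.
    rewrite (_ : [set m in M1 :|: M2 | x \in m] = [set m in M2 | x \in m]) //.
    apply/setP => m; rewrite !inE; case xm: (x \in m); rewrite ?andbF ?andbT //.
    case mM1: (m \in M1) => //=.
    have /implyP/(_ mM1)/and3P[_ s _] := H1 m.
    by case: (D x (subsetP s x xm) xW).
Qed.

Lemma pm_split (T : finType) (e e' : rel T) (W A : {set T}) : has_pm e W ->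
  (forall x y, x \in W -> y \in W -> x != y -> e x y -> ((x \in A) == (y \in A)) && ((x \in A) ==> e' x y)) ->
  has_pm e' (W :&: A).
Proof.
case/existsP=> M /andP[/forallP H /forallP C] HE.
apply/existsP; exists [set m in M | m \subset A]; apply/andP; split.
- apply/forallP => m; apply/implyP; rewrite inE => /andP[mM mA].
  have /implyP/(_ mM)/and3P[c s /forallP f] := H m. rewrite c subsetI s mA /=.
  apply/forallP => x; apply/implyP => xm; apply/forallP => y; apply/implyP => ym; apply/implyP => ne.
  have := f x; rewrite xm /= => /forallP/(_ y); rewrite ym ne /= => exy.
  have /andP[_ /implyP] := HE x y (subsetP s x xm) (subsetP s y ym) ne exy.
  apply; exact: (subsetP mA x xm).
- apply/forallP => x; apply/implyP; rewrite inE => /andP[xW xA].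
  have /implyP/(_ xW) := C x.
  rewrite (_ : [set m in [set m in M | m \subset A] | x \in m] = [set m in M | x \in m]) //.
  apply/setP => m; rewrite !inE. case mM: (m \in M) => //=.
  case xm: (x \in m); rewrite ?andbF //= andbT.
  have /implyP/(_ mM)/and3P[c s /forallP f] := H m.
  apply/subsetP => y ym. case: (eqVneq x y) => [<-//|ne].
  have := f x; rewrite xm /= => /forallP/(_ y); rewrite ym ne /= => exy.
  have /andP[/eqP eqA _] := HE x y (subsetP s x xm) (subsetP s y ym) ne exy.
  by rewrite -eqA.
Qed.

Lemma hV_node (T : finType) lab (l r : dtree T) : hV (Node lab l r) = hV l :|: hV r.
Proof. by apply/setP => x; rewrite !inE mem_cat. Qed.

Lemma hTS_sub (T : finType) (u : dtree T) x : x \in hTS u -> x \in hV u.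
Proof. by move/hTS_in; rewrite inhV. Qed.

Lemma hE_inV (T : finType) (u : dtree T) x y : hE u x y -> (x \in hV u) && (y \in hV u).
Proof. by rewrite !inhV; apply: hE_in. Qed.

Lemma card_split (T : finType) (A B C : {set T}) : A \subset B :|: C ->
  (forall x, x \in B -> x \in C -> False) -> #|A| = #|A :&: B| + #|A :&: C|.
Proof.
move=> sA D; rewrite -(cardsID B A); congr (_ + _); apply: eq_card => x; rewrite !inE.
case xA: (x \in A); rewrite ?andbF ?andbT //=.
have := subsetP sA x xA; rewrite inE.
by case xB: (x \in B); case xC: (x \in C) => //=; case: (D x).
Qed.

Definition disj (T : finType) (l r : dtree T) := forall x, x \in hV l -> x \in hV r -> False.

Lemma feas_union (T : finType) (l r : dtree T) k1 k2 Sl Sr : disj l r ->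
  kfeasible l k1 Sl -> kfeasible r k2 Sr -> kfeasible (Node FalseTwin l r) (k1 + k2) (Sl :|: Sr).
Proof.
move=> D /and3P[sl nl /existsP[X1 /and3P[x1 /eqP c1 p1]]] /and3P[sr nr /existsP[X2 /and3P[x2 /eqP c2 p2]]].
have Sl_in : forall x, x \in Sl -> x \in hV l by move=> x /(subsetP sl).
have Sr_in : forall x, x \in Sr -> x \in hV r by move=> x /(subsetP sr).
have X1_in : forall x, x \in X1 -> x \in Sl by move=> x /(subsetP x1); rewrite inE => /andP[].
have X2_in : forall x, x \in X2 -> x \in Sr by move=> x /(subsetP x2); rewrite inE => /andP[].
apply/and3P; split.
- by rewrite hV_node; apply: setUSS.
- apply/subsetP => y; rewrite in_setD hV_node in_setU /= in_setU negb_or => /andP[/andP[nl' nr'] /orP[yl|yr]].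
  + have: y \in cnbhd l Sl by apply: (subsetP nl); rewrite inE nl' yl.
    case/setUP => [yS|]; first by apply/setUP; left; rewrite inE yS.
    rewrite inE => /andP[_ /existsP[x /andP[xS exy]]].
    apply/setUP; right; rewrite inE hV_node in_setU yl /=.
    by apply/existsP; exists x; rewrite inE xS /= exy.
  + have: y \in cnbhd r Sr by apply: (subsetP nr); rewrite inE nr' yr.
    case/setUP => [yS|]; first by apply/setUP; left; rewrite inE yS orbT.
    rewrite inE => /andP[_ /existsP[x /andP[xS exy]]].
    apply/setUP; right; rewrite inE hV_node in_setU yr orbT /=.
    by apply/existsP; exists x; rewrite inE xS orbT /= exy orbT.
- apply/existsP; exists (X1 :|: X2); apply/and3P; split.
  + apply/subsetP => x /setUP[/(subsetP x1)|/(subsetP x2)]; rewrite !inE => /andP[-> ->];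
    by rewrite ?orbT.
  + rewrite cardsU (_ : X1 :&: X2 = set0) ?cards0 ?subn0 ?c1 ?c2 //.
    apply/setP => x; rewrite !inE.
    case xX1: (x \in X1); case xX2: (x \in X2) => //.
    by case: (D x (Sl_in _ (X1_in _ xX1)) (Sr_in _ (X2_in _ xX2))).
  + rewrite (_ : (Sl :|: Sr) :\: (X1 :|: X2) = (Sl :\: X1) :|: (Sr :\: X2)).
      apply: (pm_union p1 p2).
      * move=> x; rewrite !inE => /andP[_ /Sl_in xl] /andP[_ /Sr_in xr]; exact: D xl xr.
      * by move=> x y /= ->.
      * by move=> x y /= ->; rewrite orbT.
    apply/setP => x; rewrite !inE.
    case xS1: (x \in Sl); case xS2: (x \in Sr); case xX1: (x \in X1); case xX2: (x \in X2) => //=;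
    solve [ by case: (D x (Sl_in _ xS1) (Sr_in _ (X2_in _ xX2)))
          | by case: (D x (Sl_in _ (X1_in _ xX1)) (Sr_in _ xS2))
          | by case: (D x (Sl_in _ (X1_in _ xX1)) (Sr_in _ (X2_in _ xX2))) ].
Qed.

Lemma feas_split (T : finType) (l r : dtree T) k S : disj l r ->
  kfeasible (Node FalseTwin l r) k S ->
  exists k1 k2, [/\ k = k1 + k2, kfeasible l k1 (S :&: hV l) & kfeasible r k2 (S :&: hV r)].
Proof.
move=> D /and3P[sv nv /existsP[X /and3P[xs /eqP c p]]].
have XS : X \subset S by apply: subset_trans xs (subsetIl _ _).
have XV : X \subset hV l :|: hV r by rewrite -(hV_node FalseTwin); apply: subset_trans XS sv.
exists #|X :&: hV l|, #|X :&: hV r|; split; first by rewrite -c; apply: card_split.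
- apply/and3P; split; first exact: subsetIr.
  + apply/subsetP => y; rewrite in_setD => /andP[nts yl].
    have: y \in cnbhd (Node FalseTwin l r) S.
      apply: (subsetP nv); rewrite in_setD hV_node in_setU yl /= in_setU (negbTE nts) /=.
      rewrite andbT; apply/negP => /hTS_sub yr; case: (D y yl yr).
    case/setUP => [yS|]; first by apply/setUP; left; rewrite in_setI yS yl.
    rewrite inE => /andP[_ /existsP[x /andP[xS /= /orP[exy|exy]]]].
    * apply/setUP; right; rewrite inE yl /=; apply/existsP; exists x.
      by have /andP[xl _] := hE_inV exy; rewrite in_setI xS xl exy.
    * by have /andP[_ yr] := hE_inV exy; case: (D y yl yr).
  + apply/existsP; exists (X :&: hV l); rewrite eqxx /=; apply/andP; split.
    * apply/subsetP => x; rewrite !in_setI => /andP[xX xl].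
      have := subsetP xs x xX; rewrite !in_setI in_setU /= => /andP[-> /orP[xt|xt]].
        by rewrite xl xt.
      by case: (D x xl (hTS_sub xt)).
    * rewrite (_ : (S :&: hV l) :\: (X :&: hV l) = (S :\: X) :&: hV l).
        apply: (pm_split p) => x y _ _ _ /= /orP[exy|exy].
          by have /andP[-> ->] := hE_inV exy; rewrite exy.
        have /andP[xr yr] := hE_inV exy.
        have xl : (x \in hV l) = false by apply/negP => xl; case: (D x xl xr).
        have yl : (y \in hV l) = false by apply/negP => yl; case: (D y yl yr).
        by rewrite xl yl.
      apply/setP => x; rewrite !(in_setI, in_setD).
      by case: (x \in S); case: (x \in X); case: (x \in hV l).
- apply/and3P; split; first exact: subsetIr.
  + apply/subsetP => y; rewrite in_setD => /andP[nts yr].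
    have: y \in cnbhd (Node FalseTwin l r) S.
      apply: (subsetP nv); rewrite in_setD hV_node in_setU yr orbT /= in_setU (negbTE nts) orbF andbT.
      by apply/negP => /hTS_sub yl; case: (D y yl yr).
    case/setUP => [yS|]; first by apply/setUP; left; rewrite in_setI yS yr.
    rewrite inE => /andP[_ /existsP[x /andP[xS /= /orP[exy|exy]]]].
    * by have /andP[_ yl] := hE_inV exy; case: (D y yl yr).
    * apply/setUP; right; rewrite inE yr /=; apply/existsP; exists x.
      by have /andP[xr _] := hE_inV exy; rewrite in_setI xS xr exy.
  + apply/existsP; exists (X :&: hV r); rewrite eqxx /=; apply/andP; split.
    * apply/subsetP => x; rewrite !in_setI => /andP[xX xr].
      have := subsetP xs x xX; rewrite !in_setI in_setU /= => /andP[-> /orP[xt|xt]].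
        by case: (D x (hTS_sub xt) xr).
      by rewrite xr xt.
    * rewrite (_ : (S :&: hV r) :\: (X :&: hV r) = (S :\: X) :&: hV r).
        apply: (pm_split p) => x y _ _ _ /= /orP[exy|exy]; last first.
          by have /andP[-> ->] := hE_inV exy; rewrite exy.
        have /andP[xl yl] := hE_inV exy.
        have xr : (x \in hV r) = false by apply/negP => xr; case: (D x xl xr).
        have yr : (y \in hV r) = false by apply/negP => yr; case: (D y yl yr).
        by rewrite xr yr.
      apply/setP => x; rewrite !(in_setI, in_setD).
      by case: (x \in S); case: (x \in X); case: (x \in hV r).
Qed.

Lemma kfeas_le (T : finType) (u : dtree T) k S : kfeasible u k S -> k <= #|hTS u|.
Proof.
case/and3P => _ _ /existsP [X /and3P [sub /eqP <- _]].
by apply: subset_leq_card; apply: subset_trans sub _; apply: subsetIr.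
Qed.

Lemma gamma_of_feas (T : finType) (u : dtree T) k S :
  kfeasible u k S -> exists2 a, hgamma u k = Some a & a <= #|S|.
Proof.
move=> F; rewrite /hgamma (_ : [exists S, kfeasible u k S] = true); last by apply/existsP; exists S.
by eexists; first reflexivity; exact: min_le.
Qed.

Lemma feas_of_gamma (T : finType) (u : dtree T) k a :
  hgamma u k = Some a -> exists2 S, kfeasible u k S & #|S| = a.
Proof.
rewrite /hgamma; case: existsP => // [[S0 F0]] [<-].
case: (arg_minnP (fun S : {set T} => #|S|) F0) => S FS Hm; exists S => //.
apply/eqP; rewrite eqn_leq min_le //= min_ge //; exact: max_card.
Qed.

Lemma gamma_le (T : finType) (u : dtree T) k a : hgamma u k = Some a -> k <= #|hTS u|.
Proof. by case/feas_of_gamma => S /kfeas_le. Qed.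

Lemma gamma_leT (T : finType) (u : dtree T) k a : hgamma u k = Some a -> a <= #|T|.
Proof. by case/feas_of_gamma => S _ <-; apply: max_card. Qed.

Lemma hmin_spec (T : finType) (u : dtree T) m : hmin u = Some m ->
  (exists k, hgamma u k = Some m) /\ (forall k a, hgamma u k = Some a -> m <= a).
Proof.
rewrite /hmin; case: existsP => // [[k0 Hk0]] [<-]; split.
- case: (@arg_minnP _ k0 (fun k : 'I_(#|hTS u|.+1) => hgamma u k != None) (fun k : 'I_(#|hTS u|.+1) => odflt 0 (hgamma u k)) Hk0) => k Pk Hm.
  exists k; move: Pk Hm; case E: (hgamma u k) => [a|] //= _ Hm.
  congr Some; apply/eqP; rewrite eqn_leq; apply/andP; split.
    apply: min_ge; first exact: gamma_leT E.
    by move=> j /Hm.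
  have := @min_le _ (fun k : 'I_(#|hTS u|.+1) => hgamma u k != None)
     (fun k : 'I_(#|hTS u|.+1) => odflt 0 (hgamma u k)) #|T| k.
  have Pk : hgamma u k != None by rewrite E.
  move=> /(_ Pk); set z := hgamma u k; by rewrite /z E.
- move=> k a Ga; have kl := gamma_le Ga.
  have := @min_le _ (fun k : 'I_(#|hTS u|.+1) => hgamma u k != None)
     (fun k : 'I_(#|hTS u|.+1) => odflt 0 (hgamma u k)) #|T| (inord k).
  by rewrite inordK ?ltnS // Ga; apply.
Qed.

Lemma hmin_some (T : finType) (u : dtree T) k a : hgamma u k = Some a -> exists m, hmin u = Some m.
Proof.
move=> Ga; rewrite /hmin; case: existsP => [_|[]]; first by eexists.
by exists (inord k); rewrite inordK ?Ga // ltnS; exact: gamma_le Ga.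
Qed.

Lemma hbeta_max (T : finType) (u : dtree T) m k : hmin u = Some m ->
  hgamma u k = Some m -> k <= hbeta u.
Proof.
move=> Hm Gk; have kl := gamma_le Gk.
have := @leq_bigmax_cond _ (fun k : 'I_(#|hTS u|.+1) => hgamma u k == hmin u)
  (fun k : 'I_(#|hTS u|.+1) => nat_of_ord k) (inord k).
by rewrite /hbeta inordK ?ltnS // Gk Hm eqxx; apply.
Qed.

Lemma hbeta_attained (T : finType) (u : dtree T) m : hmin u = Some m ->
  hgamma u (hbeta u) = Some m.
Proof.
move=> Hm; have [[k Gk] _] := hmin_spec Hm; have kl := gamma_le Gk.
have P0 : (fun k : 'I_(#|hTS u|.+1) => hgamma u k == hmin u) (inord k).
  by rewrite /= inordK ?ltnS // Gk Hm.
rewrite /hbeta (bigmax_eq_arg _ P0).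
by case: arg_maxnP => // i /eqP -> _.
Qed.

Lemma gamma_split (T : finType) (l r : dtree T) k a : disj l r ->
  hgamma (Node FalseTwin l r) k = Some a ->
  exists k1 k2 a1 a2, [/\ k = k1 + k2, hgamma l k1 = Some a1, hgamma r k2 = Some a2 & a1 + a2 <= a].
Proof.
move=> D /feas_of_gamma [S FS <-].
have sv : S \subset hV l :|: hV r by rewrite -(hV_node FalseTwin); case/and3P: FS.
have [k1 [k2 [-> F1 F2]]] := feas_split D FS.
have [a1 G1 le1] := gamma_of_feas F1; have [a2 G2 le2] := gamma_of_feas F2.
exists k1, k2, a1, a2; split => //.
by rewrite (card_split sv D); apply: leq_add.
Qed.

Lemma gamma_union (T : finType) (l r : dtree T) k1 k2 a1 a2 : disj l r ->
  hgamma l k1 = Some a1 -> hgamma r k2 = Some a2 ->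
  exists2 a, hgamma (Node FalseTwin l r) (k1 + k2) = Some a & a <= a1 + a2.
Proof.
move=> D /feas_of_gamma [S1 F1 <-] /feas_of_gamma [S2 F2 <-].
have [a G le] := gamma_of_feas (feas_union D F1 F2).
exists a => //; apply: leq_trans le _; rewrite cardsU; apply: leq_subr.
Qed.

Theorem lemma20 (T : finType) (G : rel T) (t : dtree T) :
  simple_graph G -> distance_hereditary G -> decomp_tree G t ->
  forall vl vr : dtree T,
    is_node (Node FalseTwin vl vr) t ->
    propP vl -> propP vr ->
    hbeta (Node FalseTwin vl vr) = hbeta vl + hbeta vr.
Proof.
move=> _ _ [U _] vl vr N [ml [Hml _]] [mr [Hmr _]].
have D : disj vl vr.
  move=> x; rewrite !inhV => xl xr.
  have := node_uniq N U; rewrite /= cat_uniq => /and3P[_ /hasP H _].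
  by apply: H; exists x.
have Gl := hbeta_attained Hml; have Gr := hbeta_attained Hmr.
have [c Gc lec] := gamma_union D Gl Gr.
have [_ Ml] := hmin_spec Hml; have [_ Mr] := hmin_spec Hmr.
have lower : forall k a, hgamma (Node FalseTwin vl vr) k = Some a -> ml + mr <= a.
  move=> k a /(gamma_split D) [k1 [k2 [a1 [a2 [_ /Ml h1 /Mr h2 h]]]]]; lia.
have ec : c = ml + mr by have := lower _ _ Gc; lia.
have [m Hm] := hmin_some Gc.
have em : m = ml + mr.
  have [[k Gk] Mv] := hmin_spec Hm.
  have := lower _ _ Gk; have := Mv _ _ Gc; lia.
subst c m.
apply/eqP; rewrite eqn_leq; apply/andP; split; last exact: hbeta_max Hm Gc.
have [k1 [k2 [a1 [a2 [-> G1 G2 h]]]]] := gamma_split D (hbeta_attained Hm).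
have h1 := Ml _ _ G1; have h2 := Mr _ _ G2.
have e1 : a1 = ml by lia.
have e2 : a2 = mr by lia.
subst a1 a2.
by apply: leq_add; [exact: hbeta_max Hml G1 | exact: hbeta_max Hmr G2].
Qed.
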